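(* Let $A,B$ be idempotent $\Gamma$-graded rings and ${}_AP_B$, ${}_BQ_A$ graded bimodules unital on both sides, such that there is a graded Morita context $(A,B,P,Q,\mu,\nu)$ with surjective trace maps. Let ${}_AK$ and ${}_BL$ be unital torsion-free graded modules. Then: (1) The map $\varphi:P\otimes_B B\cdot\mathrm{HOM}_A(P,K)\to A\cdot\mathrm{HOM}_A(A,K)$ given by $\varphi(p\otimes f)(x)=f(xp)=xf(p)$ ($p\in P$, $f\in B\cdot\mathrm{HOM}_A(P,K)$, $x\in A$) is a graded epimorphism of degree $e$ of graded left $A$-modules with torsion kernel. (2) The map $\gamma:B\otimes_BL\to B\cdot\mathrm{HOM}_A(P,P\otimes_BL)$ given by $\gamma(b\otimes l)(p)=pb\otimes l$ is a graded epimorphism of degree $e$ of graded left $B$-modules with torsion kernel.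
   Context: $\Gamma$ is a fixed multiplicative group with identity $e$. Rings are associative $\Gamma$-graded, not necessarily unital; $A$ is idempotent if $A^2=A$. A graded left module is unital if $AM=M$, torsion-free if $Am=0\Rightarrow m=0$; a module has torsion kernel if every element $k$ of the kernel satisfies $Ak=0$ (for $B$-modules: $Bk=0$). A left-linear $f$ is graded of degree $\sigma$ if $f(M_\tau)\subseteq N_{\tau\sigma}$; $\mathrm{HOM}$ is the direct sum over degrees. For ${}_RM_S$ and a graded left $R$-module $N$, $\mathrm{HOM}_R(M,N)$ is a graded left $S$-module via $(sf)(m)=f(ms)$; $S\cdot H$ denotes finite sums $\sum s_ih_i$. (In particular $\mathrm{HOM}_A(A,K)$ is a left $A$-module via $(af)(x)=f(xa)$.) A graded Morita context $(A,B,P,Q,\mu,\nu)$: idempotent graded rings $A,B$, graded bimodules ${}_AP_B$, ${}_BQ_A$ unital on both sides, degree-$e$ graded bimodule maps $\mu:P\otimes_BQ\to A$, $\langle p,q\rangle=\mu(p\otimes q)$, $\nu:Q\otimes_AP\to B$, $[q,p]=\nu(q\otimes p)$, with $p'[q,p]=\langle p',q\rangle p$ and $q'\langle p,q\rangle=[q',p]q$. *)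

(* Defs.v *)
From HB Require Import structures.
From mathcomp Require Import all_boot all_algebra.
From Stdlib Require List.

Set Implicit Arguments.
Unset Strict Implicit.

Import GRing.Theory.
Local Open Scope ring_scope.

Record grp := Grp {
  gcar :> Type;
  gmul : gcar -> gcar -> gcar;
  gone : gcar;
  ginv : gcar -> gcar;
  gmulA : forall x y z, gmul x (gmul y z) = gmul (gmul x y) z;
  gmul1 : forall x, gmul gone x = x;
  gmulV : forall x, gmul (ginv x) x = gone
}.

(* A Gamma-grading of an abelian group M: a family of additive subgroups
   D g (the homogeneous elements of degree g) such that M = (+)_g D g
   (internal direct sum).                                               *)
Definition is_grading (G : grp) (M : zmodType) (D : G -> M -> Prop) : Prop :=
  (forall g, D g 0 /\ (forall x y, D g x -> D g y -> D g (x - y))) /\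
  (forall m : M, exists s : seq (G * M)%type,
      (forall x, List.In x s -> D x.1 x.2) /\ m = \sum_(x <- s) x.2) /\
  (forall s : seq (G * M)%type,
      (forall x, List.In x s -> D x.1 x.2) ->
      List.NoDup (map fst s) ->
      \sum_(x <- s) x.2 = 0 ->
      forall x, List.In x s -> x.2 = 0).

Definition additive_fun (M N : zmodType) (f : M -> N) : Prop :=
  forall x y, f (x - y) = f x - f y.

Definition graded_ring (G : grp) (A : zmodType) (mul : A -> A -> A)
    (DA : G -> A -> Prop) : Prop :=
  is_grading DA /\
  (forall a b c, mul a (mul b c) = mul (mul a b) c) /\
  (forall a b c, mul a (b + c) = mul a b + mul a c) /\
  (forall a b c, mul (a + b) c = mul a c + mul b c) /\
  (forall s t a b, DA s a -> DA t b -> DA (gmul s t) (mul a b)).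

Definition idempotent_ring (A : zmodType) (mul : A -> A -> A) : Prop :=
  forall a : A, exists s : seq (A * A)%type, a = \sum_(x <- s) mul x.1 x.2.

Definition graded_lmod (G : grp) (A : zmodType) (mul : A -> A -> A)
    (DA : G -> A -> Prop) (M : zmodType) (act : A -> M -> M)
    (DM : G -> M -> Prop) : Prop :=
  is_grading DM /\
  (forall a m n, act a (m + n) = act a m + act a n) /\
  (forall a b m, act (a + b) m = act a m + act b m) /\
  (forall a b m, act (mul a b) m = act a (act b m)) /\
  (forall s t a m, DA s a -> DM t m -> DM (gmul s t) (act a m)).

Definition graded_rmod (G : grp) (B : zmodType) (mul : B -> B -> B)
    (DB : G -> B -> Prop) (M : zmodType) (act : M -> B -> M)
    (DM : G -> M -> Prop) : Prop :=
  is_grading DM /\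
  (forall b m n, act (m + n) b = act m b + act n b) /\
  (forall a b m, act m (a + b) = act m a + act m b) /\
  (forall a b m, act m (mul a b) = act (act m a) b) /\
  (forall s t m b, DM s m -> DB t b -> DM (gmul s t) (act m b)).

Definition unital_lmod (A M : zmodType) (act : A -> M -> M) : Prop :=
  forall m : M, exists s : seq (A * M)%type, m = \sum_(x <- s) act x.1 x.2.

Definition unital_rmod (B M : zmodType) (act : M -> B -> M) : Prop :=
  forall m : M, exists s : seq (M * B)%type, m = \sum_(x <- s) act x.1 x.2.

Definition torsion_free (A M : zmodType) (act : A -> M -> M) : Prop :=
  forall m : M, (forall a, act a m = 0) -> m = 0.

Definition graded_bimod (G : grp)
    (A : zmodType) (mulA : A -> A -> A) (DA : G -> A -> Prop)
    (B : zmodType) (mulB : B -> B -> B) (DB : G -> B -> Prop)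
    (P : zmodType) (l : A -> P -> P) (r : P -> B -> P) (DP : G -> P -> Prop)
    : Prop :=
  graded_lmod mulA DA l DP /\ graded_rmod mulB DB r DP /\
  (forall a p b, r (l a p) b = l a (r p b)) /\
  unital_lmod l /\ unital_rmod r.

(* Tensor products P (x)_B M (P a right B-module, M a left B-module),
   given by the universal property of B-balanced biadditive maps.       *)
Definition biadditive (P M Z : zmodType) (beta : P -> M -> Z) : Prop :=
  (forall p1 p2 m, beta (p1 + p2) m = beta p1 m + beta p2 m) /\
  (forall p m1 m2, beta p (m1 + m2) = beta p m1 + beta p m2).

Definition balanced (B P M Z : zmodType) (r : P -> B -> P) (l : B -> M -> M)
    (beta : P -> M -> Z) : Prop :=
  forall p b m, beta (r p b) m = beta p (l b m).

Definition is_tensor (B P M : zmodType) (r : P -> B -> P) (l : B -> M -> M)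
    (T : zmodType) (tens : P -> M -> T) : Prop :=
  biadditive tens /\ balanced r l tens /\
  forall (Z : zmodType) (beta : P -> M -> Z),
    biadditive beta -> balanced r l beta ->
    exists h : T -> Z, additive_fun h /\
      (forall p m, h (tens p m) = beta p m) /\
      (forall h' : T -> Z, additive_fun h' ->
         (forall p m, h' (tens p m) = beta p m) -> forall t, h' t = h t).

(* Graded Morita context (A,B,P,Q,mu,nu); mu and nu are given as the
   B-balanced (resp. A-balanced) biadditive maps <p,q> and [q,p], i.e. as
   maps on P (x)_B Q and Q (x)_A P.                                      *)
Definition graded_morita_context (G : grp)
    (A : zmodType) (mulA : A -> A -> A) (DA : G -> A -> Prop)
    (B : zmodType) (mulB : B -> B -> B) (DB : G -> B -> Prop)
    (P : zmodType) (lP : A -> P -> P) (rP : P -> B -> P) (DP : G -> P -> Prop)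
    (Q : zmodType) (lQ : B -> Q -> Q) (rQ : Q -> A -> Q) (DQ : G -> Q -> Prop)
    (mu : P -> Q -> A) (nu : Q -> P -> B) : Prop :=
  biadditive mu /\ balanced rP lQ mu /\
  (forall a p q, mu (lP a p) q = mulA a (mu p q)) /\
  (forall p q a, mu p (rQ q a) = mulA (mu p q) a) /\
  (forall s t p q, DP s p -> DQ t q -> DA (gmul s t) (mu p q)) /\
  biadditive nu /\ balanced rQ lP nu /\
  (forall b q p, nu (lQ b q) p = mulB b (nu q p)) /\
  (forall q p b, nu q (rP p b) = mulB (nu q p) b) /\
  (forall s t q p, DQ s q -> DP t p -> DB (gmul s t) (nu q p)) /\
  (forall p' q p, rP p' (nu q p) = lP (mu p' q) p) /\
  (forall q' p q, rQ q' (mu p q) = lQ (nu q' p) q).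

Definition surjective_traces (A B P Q : zmodType)
    (mu : P -> Q -> A) (nu : Q -> P -> B) : Prop :=
  (forall a : A, exists s : seq (P * Q)%type, a = \sum_(x <- s) mu x.1 x.2) /\
  (forall b : B, exists s : seq (Q * P)%type, b = \sum_(x <- s) nu x.1 x.2).

Definition graded_hom (G : grp) (A M N : zmodType)
    (lM : A -> M -> M) (DM : G -> M -> Prop)
    (lN : A -> N -> N) (DN : G -> N -> Prop) (sigma : G) (f : M -> N) : Prop :=
  additive_fun f /\
  (forall a m, f (lM a m) = lN a (f m)) /\
  (forall tau m, DM tau m -> DN (gmul tau sigma) (f m)).

(* HOM_A(M,N) = direct sum over the degrees: finite sums of graded maps. *)
Definition HOM (G : grp) (A M N : zmodType)
    (lM : A -> M -> M) (DM : G -> M -> Prop)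
    (lN : A -> N -> N) (DN : G -> N -> Prop) (f : M -> N) : Prop :=
  exists s : seq (G * (M -> N))%type,
    (forall x, List.In x s -> graded_hom lM DM lN DN x.1 x.2) /\
    (forall m, f m = \sum_(x <- s) x.2 m).

(* For M a right S-module, S . HOM_A(M,N) = finite sums sum_i s_i h_i with
   h_i in HOM_A(M,N), where (s h)(m) = h(m s).                           *)
Definition SHOM (G : grp) (A S M N : zmodType)
    (lM : A -> M -> M) (rM : M -> S -> M) (DM : G -> M -> Prop)
    (lN : A -> N -> N) (DN : G -> N -> Prop) (f : M -> N) : Prop :=
  exists s : seq (S * (M -> N))%type,
    (forall x, List.In x s -> HOM lM DM lN DN x.2) /\
    (forall m, f m = \sum_(x <- s) x.2 (rM m x.1)).

(* Main.v *)
From HB Require Import structures.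
Require Import Defs.
From mathcomp Require Import all_boot all_algebra.
From Stdlib Require Import ClassicalEpsilon.
Set Implicit Arguments. Unset Strict Implicit.
Import GRing.Theory.
Local Open Scope ring_scope.

Lemma addP_props (M N : zmodType) (f : M -> N) :
  (forall x y, f (x + y) = f x + f y) ->
  [/\ f 0 = 0, forall x, f (- x) = - f x & additive_fun f].
Proof.
move=> Hf.
have f0 : f 0 = 0 by apply/(addrI (f 0)); rewrite -Hf !addr0.
have fN : forall x, f (- x) = - f x.
  by move=> x; apply/(addrI (f x)); rewrite -Hf !subrr.
by split=> // x y; rewrite Hf fN.
Qed.

Lemma additiveD (M N : zmodType) (f : M -> N) :
  additive_fun f -> forall x y, f (x + y) = f x + f y.
Proof.
move=> Hf x y.
have f0 : f 0 = 0 by rewrite -(subrr 0) Hf subrr.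
have fN : forall z, f (- z) = - f z by move=> z; rewrite -sub0r Hf f0 sub0r.
by rewrite -[y]opprK Hf !fN !opprK.
Qed.

Lemma addf_sum (M N : zmodType) (f : M -> N) :
  (forall x y, f (x + y) = f x + f y) ->
  forall (I : Type) (s : seq I) (F : I -> M),
  f (\sum_(i <- s) F i) = \sum_(i <- s) f (F i).
Proof.
move=> Hf; have [f0 _ _] := addP_props Hf.
by move=> I s F; elim: s => [|i s IH]; rewrite ?big_nil ?big_cons ?Hf ?IH.
Qed.

Lemma sum_closed (M : zmodType) (Sp : M -> Prop) :
  Sp 0 -> (forall a b, Sp a -> Sp b -> Sp (a + b)) ->
  forall (J : Type) (s : seq J) (F : J -> M),
  (forall j, List.In j s -> Sp (F j)) -> Sp (\sum_(j <- s) F j).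
Proof.
move=> H0 HD J s F; elim: s => [|j s IH] Hs; first by rewrite big_nil.
rewrite big_cons; apply: HD; first by apply: Hs; left.
by apply: IH => i Hi; apply: Hs; right.
Qed.

Lemma sum_zero (M : zmodType) (J : Type) (s : seq J) (F : J -> M) :
  (forall j, List.In j s -> F j = 0) -> \sum_(j <- s) F j = 0.
Proof.
move=> H; apply: (@sum_closed M (fun x => x = 0)) => //.
by move=> a b -> ->; rewrite addr0.
Qed.

Lemma grading_add (G : grp) (M : zmodType) (D : G -> M -> Prop) :
  is_grading D -> forall g x y, D g x -> D g y -> D g (x + y).
Proof.
move=> [H0 _] g x y Hx Hy; have [Z S] := H0 g.
have Ny : D g (- y) by rewrite -sub0r; apply: S.
by rewrite -[y]opprK; apply: S.
Qed.

Lemma grading_0 (G : grp) (M : zmodType) (D : G -> M -> Prop) :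
  is_grading D -> forall g, D g 0.
Proof. by move=> [H0 _] g; case: (H0 g). Qed.

Lemma grading_N (G : grp) (M : zmodType) (D : G -> M -> Prop) :
  is_grading D -> forall g x, D g x -> D g (- x).
Proof. by move=> [H0 _] g x Hx; have [Z S] := H0 g; rewrite -sub0r; apply: S. Qed.

Lemma grading_sum (G : grp) (M : zmodType) (D : G -> M -> Prop) :
  is_grading D -> forall g (J : Type) (s : seq J) (F : J -> M),
  (forall j, List.In j s -> D g (F j)) -> D g (\sum_(j <- s) F j).
Proof.
move=> HD g J s F; apply: (@sum_closed M (D g)); first exact: grading_0.
exact: grading_add.
Qed.

Definition eqG (G : grp) (a b : G) : bool :=
  if excluded_middle_informative (a = b) then true else false.

Lemma eqGP (G : grp) (a b : G) : reflect (a = b) (eqG a b).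
Proof. rewrite /eqG; case: excluded_middle_informative => h; constructor => //. Qed.

Lemma eqG_refl (G : grp) (a : G) : eqG a a.
Proof. exact/eqGP. Qed.

Fixpoint ginsert (G : grp) (M : zmodType) (x : G * M) (l : seq (G * M)) :
  seq (G * M) :=
  match l with
  | [::] => [:: x]
  | y :: l' => if eqG y.1 x.1 then (y.1, y.2 + x.2) :: l' else y :: ginsert x l'
  end.

Definition ggroup (G : grp) (M : zmodType) (s : seq (G * M)) :=
  foldr (@ginsert G M) [::] s.

Section GInsert.
Variables (G : grp) (M : zmodType).
Implicit Types (x : G * M) (l : seq (G * M)).

Lemma ginsert_sum x l :
  \sum_(y <- ginsert x l) y.2 = x.2 + \sum_(y <- l) y.2.
Proof.
elim: l => [|y l IH] /=; first by rewrite big_seq1 big_nil addr0.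
case: (eqG y.1 x.1); rewrite !big_cons /=.
  by rewrite addrAC addrC.
by rewrite IH addrCA.
Qed.

Lemma ginsert_fsum x l g :
  \sum_(y <- ginsert x l) (if eqG y.1 g then y.2 else 0) =
  (if eqG x.1 g then x.2 else 0) + \sum_(y <- l) (if eqG y.1 g then y.2 else 0).
Proof.
elim: l => [|y l IH] /=; first by rewrite big_seq1 big_nil addr0.
case: eqGP => [E|_]; rewrite !big_cons /=.
  rewrite E; case: (eqG x.1 g); last by rewrite !add0r.
  by rewrite addrA [x.2 + _]addrC.
by rewrite IH addrCA.
Qed.

Lemma ginsert_in x l g :
  List.In g (map fst (ginsert x l)) -> g = x.1 \/ List.In g (map fst l).
Proof.
elim: l => [|y l IH] /=; first by case=> [->|[]]; left.
case: eqGP => [E|_] /=.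
  by case=> [<-|H]; right; [left|right].
case=> [<-|/IH [->|H]]; [by right; left| by left| by right; right].
Qed.

Lemma ginsert_nodup x l :
  List.NoDup (map fst l) -> List.NoDup (map fst (ginsert x l)).
Proof.
elim: l => [|y l IH] /=; first by move=> _; constructor; [case|constructor].
move=> Hn; inversion Hn as [|a b Hy Hl]; subst.
case: eqGP => [E|NE] /=; first by constructor.
constructor; last exact: IH.
by case/ginsert_in => // E; apply: NE.
Qed.

Lemma ginsert_hom (D : G -> M -> Prop) (HD : is_grading D) x l :
  D x.1 x.2 -> (forall y, List.In y l -> D y.1 y.2) ->
  forall y, List.In y (ginsert x l) -> D y.1 y.2.
Proof.
move=> Hx; elim: l => [|z l IH] Hl y /=; first by case=> [<-|[]].
case: eqGP => [E|_] /=.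
  case=> [<-|H]; last by apply: Hl; right.
  by rewrite /=; apply: (grading_add HD); [apply: Hl; left| rewrite E].
case=> [<-|H]; first by apply: Hl; left.
by apply: IH => // w Hw; apply: Hl; right.
Qed.

End GInsert.

Lemma grading_filter (G : grp) (M : zmodType) (D : G -> M -> Prop) :
  is_grading D -> forall s : seq (G * M),
  (forall x, List.In x s -> D x.1 x.2) -> \sum_(x <- s) x.2 = 0 ->
  forall g, \sum_(x <- s) (if eqG x.1 g then x.2 else 0) = 0.
Proof.
move=> HD s Hs H0 g.
have E1 : forall s : seq (G * M), \sum_(x <- ggroup s) (if eqG x.1 g then x.2 else 0)
   = \sum_(x <- s) (if eqG x.1 g then x.2 else 0).
  by elim=> [|x s' IH] /=; rewrite ?big_nil // ginsert_fsum IH big_cons.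
have E2 : forall s : seq (G * M), \sum_(x <- ggroup s) x.2 = \sum_(x <- s) x.2.
  by elim=> [|x s' IH] /=; rewrite ?big_nil // ginsert_sum IH big_cons.
have Hd : forall s : seq (G * M), (forall x, List.In x s -> D x.1 x.2) ->
    forall y, List.In y (ggroup s) -> D y.1 y.2.
  elim=> [|x s' IH] Hs' y /=; first by [].
  apply: ginsert_hom => //; first by apply: Hs'; left.
  by apply: IH => z Hz; apply: Hs'; right.
have Hn : forall s : seq (G * M), List.NoDup (map fst (ggroup s)).
  by elim=> [|x s' IH] /=; [constructor|apply: ginsert_nodup].
have Z := HD.2.2 (ggroup s) (Hd s Hs) (Hn s).
rewrite E2 in Z; have {}Z := Z H0.
rewrite -E1; apply: sum_zero => x Hx; rewrite (Z x Hx); by case: eqG.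
Qed.

Lemma grading_homog (G : grp) (M : zmodType) (D : G -> M -> Prop) :
  is_grading D -> forall (s : seq (G * M)),
  (forall x, List.In x s -> D x.1 x.2) ->
  forall sigma t, D sigma t -> t = \sum_(x <- s) x.2 ->
  t = \sum_(x <- s) (if eqG x.1 sigma then x.2 else 0).
Proof.
move=> HD s Hs sigma t Ht E.
have := grading_filter HD (s := (sigma, - t) :: s) _ _ sigma.
rewrite big_cons /= -E addNr => H.
have {H} := H _ erefl.
rewrite big_cons /= eqG_refl => H.
apply/eqP; rewrite eq_sym -subr_eq0 addrC; apply/eqP; apply: H.
by move=> x [<-|Hx]; [apply: grading_N|apply: Hs].
Qed.
Definition zspan (T : zmodType) (X : T -> Prop) (t : T) : Prop :=
  exists s : seq T, (forall y, List.In y s -> X y \/ X (- y)) /\ t = \sum_(y <- s) y.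

Definition zspanb (T : zmodType) (X : T -> Prop) (t : T) : bool :=
  if excluded_middle_informative (zspan X t) then true else false.

Lemma zspanbP (T : zmodType) (X : T -> Prop) t : reflect (zspan X t) (zspanb X t).
Proof. rewrite /zspanb; case: excluded_middle_informative => h; constructor => //. Qed.

Lemma zspan_closed (T : zmodType) (X : T -> Prop) : zmod_closed (zspanb X).
Proof.
split.
  by rewrite unfold_in; apply/zspanbP; exists [::]; rewrite big_nil.
move=> x y; rewrite !unfold_in => /zspanbP [s1 [H1 E1]] /zspanbP [s2 [H2 E2]]; rewrite E1 E2.
apply/zspanbP; exists (s1 ++ map (fun y => - y) s2); split.
  move=> w Hw; case: (List.in_app_or _ _ _ Hw) => [/H1 //|].
  case/List.in_map_iff => z [<- Hz].
  by rewrite opprK; case: (H2 z Hz); auto.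
by rewrite big_cat big_map sumrN.
Qed.

HB.instance Definition _ (T : zmodType) (X : T -> Prop) :=
  GRing.isZmodClosed.Build T (zspanb X) (zspan_closed X).

Record span_sub (T : zmodType) (X : T -> Prop) := SpanSub { ssval :> T; ssP : zspanb X ssval }.
HB.instance Definition _ (T : zmodType) (X : T -> Prop) := [isSub for (@ssval T X)].
HB.instance Definition _ (T : zmodType) (X : T -> Prop) := [Choice of span_sub X by <:].
HB.instance Definition _ (T : zmodType) (X : T -> Prop) := [SubChoice_isSubZmodule of span_sub X by <:].

Lemma ssvalB (T : zmodType) (X : T -> Prop) (x y : span_sub X) : ssval (x - y) = ssval x - ssval y.
Proof. exact: (raddfB (GRing.Additive.clone _ _ val _)). Qed.
Lemma ssvalD (T : zmodType) (X : T -> Prop) (x y : span_sub X) : ssval (x + y) = ssval x + ssval y.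
Proof. exact: (raddfD (GRing.Additive.clone _ _ val _)). Qed.

Lemma in_cat_or (X : Type) (x : X) (s1 s2 : seq X) :
  List.In x (s1 ++ s2) -> List.In x s1 \/ List.In x s2.
Proof. exact: List.in_app_or. Qed.

Section Tensor.
Variables (B P M : zmodType) (r : P -> B -> P) (l : B -> M -> M)
  (T : zmodType) (tens : P -> M -> T) (Ht : is_tensor r l tens).

Lemma tens_addl p1 p2 m : tens (p1 + p2) m = tens p1 m + tens p2 m.
Proof. by case: Ht => [[H _] _]. Qed.
Lemma tens_addr p m1 m2 : tens p (m1 + m2) = tens p m1 + tens p m2.
Proof. by case: Ht => [[_ H] _]. Qed.
Lemma tens_bal p b m : tens (r p b) m = tens p (l b m).
Proof. by case: Ht => [_ [H _]]. Qed.
Lemma tens_Nl p m : tens (- p) m = - tens p m.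
Proof. by have [_ H _] := addP_props (fun x y => tens_addl x y m). Qed.
Lemma tens_0r p : tens p 0 = 0.
Proof. by have [H _ _] := addP_props (tens_addr p). Qed.
Lemma tens_0l m : tens 0 m = 0.
Proof. by have [H _ _] := addP_props (fun x y => tens_addl x y m). Qed.
Lemma tens_suml (J : Type) (s : seq J) (F : J -> P) m :
  tens (\sum_(j <- s) F j) m = \sum_(j <- s) tens (F j) m.
Proof. exact: (addf_sum (fun x y => tens_addl x y m)). Qed.
Lemma tens_sumr (J : Type) (s : seq J) (F : J -> M) p :
  tens p (\sum_(j <- s) F j) = \sum_(j <- s) tens p (F j).
Proof. exact: (addf_sum (tens_addr p)). Qed.

Lemma tensor_ext (Z : zmodType) (f g : T -> Z) :
  additive_fun f -> additive_fun g ->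
  (forall p m, f (tens p m) = g (tens p m)) -> forall t, f t = g t.
Proof.
move=> Hf Hg Hfg.
have fD := additiveD Hf.
case: Ht => [_ [_ Hu]].
have Hb : biadditive (fun p m => f (tens p m)).
  by split=> *; rewrite ?tens_addl ?tens_addr fD.
have Hbal : balanced r l (fun p m => f (tens p m)).
  by move=> p b m; rewrite tens_bal.
have [h [_ [_ Huniq]]] := Hu Z (fun p m => f (tens p m)) Hb Hbal.
move=> t; rewrite (Huniq f Hf (fun _ _ => erefl)).
by rewrite (Huniq g Hg (fun p m => esym (Hfg p m))).
Qed.

Lemma tensor_univ (Z : zmodType) (beta : P -> M -> Z) :
  biadditive beta -> balanced r l beta ->
  exists h : T -> Z, additive_fun h /\ forall p m, h (tens p m) = beta p m.
Proof.
move=> Hb Hbal; case: Ht => [_ [_ Hu]].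
by have [h [H1 [H2 _]]] := Hu Z beta Hb Hbal; exists h.
Qed.

Lemma tensor_span t : exists s : seq (P * M), t = \sum_(x <- s) tens x.1 x.2.
Proof.
pose X := fun t : T => exists p m, t = tens p m.
have inX : forall p m, zspanb X (tens p m).
  move=> p m; apply/zspanbP; exists [:: tens p m]; split; last by rewrite big_seq1.
  by move=> y [<-|[]]; left; exists p, m.
pose beta p m : span_sub X := SpanSub (inX p m).
have [h [hadd hb]] : exists h : T -> span_sub X,
    additive_fun h /\ forall p m, h (tens p m) = beta p m.
  apply: tensor_univ.
    by split=> *; apply: val_inj; rewrite /= ?tens_addl ?tens_addr.
  by move=> p b m; apply: val_inj; rewrite /= tens_bal.
have E : forall t, ssval (h t) = t.
  apply: (tensor_ext (f := fun t => ssval (h t)) (g := id)).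
  - by move=> x y; rewrite hadd ssvalB.
  - by [].
  - by move=> p m; rewrite hb.
have := ssP (h t); rewrite E => /zspanbP [s [Hs ->]].
elim: s Hs => [|y s IH] Hs; first by exists [::]; rewrite !big_nil.
have [s' E'] := IH (fun z Hz => Hs z (or_intror Hz)).
case: (Hs y (or_introl erefl)) => [[p [m ->]]|[p [m Ey]]].
  by exists ((p, m) :: s'); rewrite !big_cons E'.
exists ((- p, m) :: s'); rewrite !big_cons E' /= tens_Nl -Ey opprK //.
Qed.

Variables (G : grp) (DP : G -> P -> Prop) (DM : G -> M -> Prop).
Hypothesis HP : forall p, exists s : seq (G * P),
  (forall x, List.In x s -> DP x.1 x.2) /\ p = \sum_(x <- s) x.2.
Hypothesis HM : forall m, exists s : seq (G * M),
  (forall x, List.In x s -> DM x.1 x.2) /\ m = \sum_(x <- s) x.2.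

Definition hspan (t : T) := exists s : seq ((G * P) * (G * M)),
  (forall z, List.In z s -> DP z.1.1 z.1.2 /\ DM z.2.1 z.2.2) /\
  t = \sum_(z <- s) tens z.1.2 z.2.2.

Lemma hspan_sum (J : Type) (s : seq J) (F : J -> T) :
  (forall j, List.In j s -> hspan (F j)) -> hspan (\sum_(j <- s) F j).
Proof.
apply: sum_closed; first by exists [::]; rewrite big_nil.
move=> a b; rewrite /hspan; move=> [s1 [H1 E1]] [s2 [H2 E2]]; rewrite E1 E2; exists (s1 ++ s2); split.
  by move=> z Hz; case: (in_cat_or Hz) => [/H1|/H2].
by rewrite big_cat.
Qed.

Lemma tensor_hspan t : hspan t.
Proof.
have [s ->] := tensor_span t.
apply: hspan_sum => x _.
have [sp [Hsp ->]] := HP x.1; rewrite tens_suml; apply: hspan_sum => y Hy.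
have [sm [Hsm ->]] := HM x.2; rewrite tens_sumr; apply: hspan_sum => w Hw.
exists [:: (y, w)]; split; last by rewrite big_seq1.
by move=> z [<-|[]]; split; [apply: Hsp|apply: Hsm].
Qed.

End Tensor.

Lemma gmul1r (G : grp) (x : G) : gmul x (gone G) = x.
Proof.
have E : forall y z : G, gmul (ginv y) (gmul y z) = z.
  by move=> y z; rewrite gmulA gmulV gmul1.
rewrite -[LHS](E (ginv x)) -[RHS](E (ginv x)); congr gmul.
by rewrite gmulA gmulV gmul1.
Qed.

Lemma eq_sum_In (M : zmodType) (J : Type) (s : seq J) (F F' : J -> M) :
  (forall j, List.In j s -> F j = F' j) -> \sum_(j <- s) F j = \sum_(j <- s) F' j.
Proof.
elim: s => [|j s IH] H; rewrite ?big_nil // !big_cons H; last by left.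
by rewrite IH // => i Hi; apply: H; right.
Qed.

Section Homs.
Variables (G : grp) (A M N : zmodType) (lM : A -> M -> M) (DM : G -> M -> Prop)
  (lN : A -> N -> N) (DN : G -> N -> Prop).
Hypothesis HNadd : forall a n1 n2, lN a (n1 + n2) = lN a n1 + lN a n2.

Lemma HOM_sum (J : Type) (s : seq J) (F : J -> M -> N) (f : M -> N) :
  (forall j, List.In j s -> HOM lM DM lN DN (F j)) ->
  (forall m, f m = \sum_(j <- s) F j m) -> HOM lM DM lN DN f.
Proof.
elim: s f => [|j s IH] f Hs Hf.
  by exists [::]; split => // m; rewrite Hf !big_nil.
have [s1 [H1 E1]] := Hs j (or_introl erefl).
have [s2 [H2 E2]] := IH (fun m => \sum_(j <- s) F j m)
  (fun i Hi => Hs i (or_intror Hi)) (fun m => erefl).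
exists (s1 ++ s2); split.
  by move=> z Hz; case: (in_cat_or Hz) => [/H1|/H2].
by move=> m; rewrite Hf big_cons E1 E2 big_cat.
Qed.

Lemma HOM_graded sigma f : graded_hom lM DM lN DN sigma f -> HOM lM DM lN DN f.
Proof.
by move=> Hf; exists [:: (sigma, f)]; split; [move=> x [<-|[]]|move=> m; rewrite big_seq1].
Qed.

Lemma HOM_additive f : HOM lM DM lN DN f -> additive_fun f.
Proof.
move=> [s [Hs Hf]] x y; rewrite !Hf -sumrB; apply: eq_sum_In => z Hz.
by case: (Hs z Hz) => [Ha _]; rewrite Ha.
Qed.

Lemma HOM_lin f : HOM lM DM lN DN f -> forall a m, f (lM a m) = lN a (f m).
Proof.
move=> [s [Hs Hf]] a m; rewrite !Hf (addf_sum (HNadd a)); apply: eq_sum_In => z Hz.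
by case: (Hs z Hz) => [_ [Hl _]]; rewrite Hl.
Qed.

Lemma graded_hom_sum (HDN : is_grading DN) sigma (J : Type) (s : seq J)
  (F : J -> M -> N) (f : M -> N) :
  (forall j, List.In j s -> graded_hom lM DM lN DN sigma (F j)) ->
  (forall m, f m = \sum_(j <- s) F j m) -> graded_hom lM DM lN DN sigma f.
Proof.
move=> Hs Hf; have Hh : HOM lM DM lN DN f.
  by apply: (HOM_sum (F := F)) => // j Hj; apply: HOM_graded; apply: Hs.
split; first exact: HOM_additive.
split; first exact: HOM_lin.
move=> tau m Hm; rewrite Hf; apply: grading_sum => // j Hj.
by case: (Hs j Hj) => [_ [_ Hd]]; apply: Hd.
Qed.

Variables (S : zmodType) (rM : M -> S -> M).

Lemma SHOM_sum (J : Type) (s : seq J) (F : J -> M -> N) (f : M -> N) :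
  (forall j, List.In j s -> SHOM lM rM DM lN DN (F j)) ->
  (forall m, f m = \sum_(j <- s) F j m) -> SHOM lM rM DM lN DN f.
Proof.
elim: s f => [|j s IH] f Hs Hf.
  by exists [::]; split => // m; rewrite Hf !big_nil.
have [s1 [H1 E1]] := Hs j (or_introl erefl).
have [s2 [H2 E2]] := IH (fun m => \sum_(j <- s) F j m)
  (fun i Hi => Hs i (or_intror Hi)) (fun m => erefl).
exists (s1 ++ s2); split.
  by move=> z Hz; case: (in_cat_or Hz) => [/H1|/H2].
by move=> m; rewrite Hf big_cons E1 E2 big_cat.
Qed.

Lemma SHOM_single (b : S) (g f : M -> N) :
  HOM lM DM lN DN g -> (forall m, f m = g (rM m b)) -> SHOM lM rM DM lN DN f.
Proof.
by move=> Hg Hf; exists [:: (b, g)]; split; [move=> x [<-|[]]|move=> m; rewrite big_seq1].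
Qed.

Hypothesis HrMadd : forall m1 m2 b, rM (m1 + m2) b = rM m1 b + rM m2 b.

Lemma SHOM_additive f : SHOM lM rM DM lN DN f -> additive_fun f.
Proof.
move=> [s [Hs Hf]] x y; rewrite !Hf -sumrB; apply: eq_sum_In => z Hz.
have [_ _ Hr] := addP_props (fun m1 m2 => HrMadd m1 m2 z.1).
by rewrite Hr (HOM_additive (Hs z Hz)).
Qed.

Hypothesis HrMl : forall a m b, rM (lM a m) b = lM a (rM m b).

Lemma SHOM_lin f : SHOM lM rM DM lN DN f -> forall a m, f (lM a m) = lN a (f m).
Proof.
move=> [s [Hs Hf]] a m; rewrite !Hf (addf_sum (HNadd a)); apply: eq_sum_In => z Hz.
by rewrite HrMl (HOM_lin (Hs z Hz)).
Qed.

End Homs.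

Lemma HOM_psi (G : grp) (A X M' M N : zmodType) (lM' : A -> M' -> M')
  (DM' : G -> M' -> Prop) (lM : A -> M -> M) (DM : G -> M -> Prop)
  (lN : A -> N -> N) (DN : G -> N -> Prop) (DX : G -> X -> Prop)
  (psi : X -> M' -> M)
  (HX : forall x, exists s : seq (G * X),
          (forall y, List.In y s -> DX y.1 y.2) /\ x = \sum_(y <- s) y.2)
  (Hpsi1 : forall x1 x2 m, psi (x1 + x2) m = psi x1 m + psi x2 m)
  (Hpsi2 : forall x m1 m2, psi x (m1 + m2) = psi x m1 + psi x m2)
  (Hpsil : forall x a m, psi x (lM' a m) = lM a (psi x m))
  (Hpsid : forall s t x m, DX s x -> DM' t m -> DM (gmul t s) (psi x m))
  (HNadd : forall a n1 n2, lN a (n1 + n2) = lN a n1 + lN a n2)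
  (g : M -> N) (Hg : HOM lM DM lN DN g) (x : X) :
  HOM lM' DM' lN DN (fun m => g (psi x m)).
Proof.
have [sg [Hsg Eg]] := Hg.
have [sx [Hsx Ex]] := HX x.
apply: (HOM_sum (s := sg) (F := fun z m => z.2 (psi x m))); last first.
  by move=> m /=; rewrite Eg.
move=> z Hz; have [zadd [zlin zdeg]] := Hsg z Hz.
apply: (HOM_sum (s := sx) (F := fun y m => z.2 (psi y.2 m))); last first.
  move=> m; rewrite Ex (addf_sum (fun x1 x2 => Hpsi1 x1 x2 m)).
  exact: (addf_sum (additiveD zadd)).
move=> y Hy; apply: (@HOM_graded _ _ _ _ _ _ _ _ (gmul y.1 z.1)).
split.
  have [_ _ Hp] := addP_props (Hpsi2 y.2).
  by move=> m1 m2; rewrite Hp zadd.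
split; first by move=> a m; rewrite Hpsil zlin.
move=> tau m Hm; rewrite gmulA; apply: zdeg; apply: Hpsid => //; exact: Hsx.
Qed.

Lemma fchoice (X Y : Type) (R : X -> Y -> Prop) :
  (forall x, exists y, R x y) -> exists f : X -> Y, forall x, R x (f x).
Proof.
move=> H; exists (fun x => proj1_sig (constructive_indefinite_description _ (H x))).
move=> x; exact: proj2_sig.
Qed.

Lemma im_sum (M T N : zmodType) (gam : M -> T -> N)
  (Hg : forall m, additive_fun (gam m)) (J : Type) (s : seq J)
  (F : J -> M -> N) (f : M -> N) :
  (forall j, List.In j s -> exists t, forall m, gam m t = F j m) ->
  (forall m, f m = \sum_(j <- s) F j m) -> exists t, forall m, gam m t = f m.
Proof.
elim: s f => [|j s IH] f Hs Hf.
  exists 0 => m; rewrite Hf big_nil.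
  by have [] := addP_props (additiveD (Hg m)).
have [t1 E1] := Hs j (or_introl erefl).
have [t2 E2] := IH (fun m => \sum_(j <- s) F j m)
  (fun i Hi => Hs i (or_intror Hi)) (fun m => erefl).
exists (t1 + t2) => m; by rewrite Hf big_cons (additiveD (Hg m)) E1 E2.
Qed.

Lemma additive_sub (M N : zmodType) (f g : M -> N) :
  additive_fun f -> additive_fun g -> additive_fun (fun x => f x - g x).
Proof.
move=> Hf Hg x y; rewrite Hf Hg; set a := f x; set b := f y; set c := g x; set d := g y.
by rewrite !opprB (addrACA a (- b)) (addrACA a (- c)) (addrC (- b)).
Qed.

Lemma additive_comp (M N O : zmodType) (f : N -> O) (g : M -> N) :
  additive_fun f -> additive_fun g -> additive_fun (fun x => f (g x)).
Proof. by move=> Hf Hg x y; rewrite Hg Hf. Qed.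

Lemma additive_add (M N : zmodType) (f g : M -> N) :
  additive_fun f -> additive_fun g -> additive_fun (fun x => f x + g x).
Proof.
move=> Hf Hg x y; rewrite Hf Hg; set a := f x; set b := f y; set c := g x; set d := g y.
by rewrite opprD addrACA.
Qed.

Lemma in_map_seq (X Y : Type) (f : X -> Y) (s : seq X) y :
  List.In y (map f s) -> exists x, List.In x s /\ y = f x.
Proof.
elim: s => [|x s IH] //= [<-|/IH [z [Hz ->]]]; first by exists x; split; [left|].
by exists z; split; [right|].
Qed.

Lemma dec_sum (M N : zmodType) (I : Type) (R : I -> Prop) (ev : I -> M -> N)
  (J : Type) (s : seq J) (F : J -> M -> N) (f : M -> N) :
  (forall j, List.In j s -> exists l : seq I,
      (forall y, List.In y l -> R y) /\ forall m, F j m = \sum_(y <- l) ev y m) ->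
  (forall m, f m = \sum_(j <- s) F j m) ->
  exists l : seq I, (forall y, List.In y l -> R y) /\
     forall m, f m = \sum_(y <- l) ev y m.
Proof.
elim: s f => [|j s IH] f Hs Hf.
  by exists [::]; split => // m; rewrite Hf !big_nil.
have [l1 [H1 E1]] := Hs j (or_introl erefl).
have [l2 [H2 E2]] := IH (fun m => \sum_(j <- s) F j m)
  (fun i Hi => Hs i (or_intror Hi)) (fun m => erefl).
exists (l1 ++ l2); split.
  by move=> z Hz; case: (in_cat_or Hz) => [/H1|/H2].
by move=> m; rewrite Hf big_cons E1 E2 big_cat.
Qed.

Section Part1.
Variables (G : grp)
  (A : zmodType) (mulA : A -> A -> A) (DA : G -> A -> Prop)
  (B : zmodType) (mulB : B -> B -> B) (DB : G -> B -> Prop)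
  (HA : graded_ring mulA DA)
  (HB : graded_ring mulB DB)
  (P : zmodType) (lP : A -> P -> P) (rP : P -> B -> P) (DP : G -> P -> Prop)
  (Q : zmodType) (lQ : B -> Q -> Q) (rQ : Q -> A -> Q) (DQ : G -> Q -> Prop)
  (HP : graded_bimod mulA DA mulB DB lP rP DP)
  (HQ : graded_bimod mulB DB mulA DA lQ rQ DQ)
  (mu : P -> Q -> A) (nu : Q -> P -> B)
  (Hctx : graded_morita_context mulA DA mulB DB lP rP DP lQ rQ DQ mu nu)
  (Hsurj : surjective_traces mu nu)
  (K : zmodType) (lK : A -> K -> K) (DK : G -> K -> Prop)
  (HK : graded_lmod mulA DA lK DK)
  (H : zmodType) (lH : B -> H -> H) (DH : G -> H -> Prop) (iota : H -> P -> K)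
  (Hiota_add : forall h1 h2 p, iota (h1 - h2) p = iota h1 p - iota h2 p)
  (Hiota_inj : forall h1 h2, (forall p, iota h1 p = iota h2 p) -> h1 = h2)
  (Hiota_in : forall h, SHOM lP rP DP lK DK (iota h))
  (Hiota_onto : forall f, SHOM lP rP DP lK DK f -> exists h, forall p, iota h p = f p)
  (Hiota_lin : forall b h p, iota (lH b h) p = iota h (rP p b))
  (Hiota_deg : forall sigma h, DH sigma h <-> graded_hom lP DP lK DK sigma (iota h))
  (T1 : zmodType) (tens1 : P -> H -> T1) (Ht1 : is_tensor rP lH tens1)
  (lT1 : A -> T1 -> T1) (DT1 : G -> T1 -> Prop)
  (HlT1_add : forall a t u, lT1 a (t + u) = lT1 a t + lT1 a u)
  (HlT1 : forall a p h, lT1 a (tens1 p h) = tens1 (lP a p) h)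
  (HDT1 : is_grading DT1)
  (HDT1t : forall s t p h, DP s p -> DH t h -> DT1 (gmul s t) (tens1 p h)).

Lemma part1 :
  (exists phi : T1 -> A -> K,
     (forall t u x, phi (t - u) x = phi t x - phi u x) /\
     (forall p h x, phi (tens1 p h) x = iota h (lP x p) /\
                    phi (tens1 p h) x = lK x (iota h p)) /\
     (forall t, SHOM mulA mulA DA lK DK (phi t)) /\
     (forall f, SHOM mulA mulA DA lK DK f -> exists t, forall x, phi t x = f x) /\
     (forall a t x, phi (lT1 a t) x = phi t (mulA x a)) /\
     (forall sigma t, DT1 sigma t -> graded_hom mulA DA lK DK sigma (phi t)) /\
     (forall t, (forall x, phi t x = 0) -> forall a, lT1 a t = 0)).
Proof.
case: HA => [HAg [mulAA [mulADr [mulADl mulAdeg]]]].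
case: HB => [HBg [mulBA [mulBDr [mulBDl mulBdeg]]]].
case: HP => [[HPg [lPD [lPDl [lPM lPdeg]]]] [[_ [rPD [rPDr [rPM rPdeg]]]] [lrP [HPul HPur]]]].
case: HQ => [[HQg [lQD [lQDl [lQM lQdeg]]]] [[_ [rQD [rQDr [rQM rQdeg]]]] [lrQ [HQul HQur]]]].
case: Hctx => [[muD1 muD2] [mubal [muL [muR [mudeg [[nuD1 nuD2] [nubal [nuL [nuR [nudeg [PC QC]]]]]]]]]]].
case: Hsurj => [Hsa Hsb].
case: HK => [HKg [lKD [lKDl [lKM lKdeg]]]].
have iadd : forall h, additive_fun (iota h).
  by move=> h; apply: (SHOM_additive (fun m1 m2 b => rPD b m1 m2) (Hiota_in h)).
have ilin : forall h a p, iota h (lP a p) = lK a (iota h p).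
  by move=> h; apply: (SHOM_lin lKD lrP (Hiota_in h)).
have iaddh : forall p, additive_fun (fun h => iota h p).
  by move=> p h1 h2; rewrite Hiota_add.
have iDh := fun p => additiveD (iaddh p).
have i0 : forall p, iota 0 p = 0.
  by move=> p; have [] := addP_props (iDh p).
have lPsub : forall p, additive_fun (fun a => lP a p).
  by move=> p; have [] := addP_props (fun x y => lPDl x y p).
have lT1sub : forall a, additive_fun (lT1 a).
  by move=> a; have [] := addP_props (HlT1_add a).
have Hex : forall x, exists h : T1 -> K, additive_fun h /\
    forall p h', h (tens1 p h') = iota h' (lP x p).
  move=> x; apply: (tensor_univ Ht1).
    by split=> *; rewrite ?lPD ?(additiveD (iadd _)) ?iDh.
  by move=> p b h'; rewrite -lrP Hiota_lin.
have [F HF] := fchoice Hex.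
have Fadd : forall x, additive_fun (F x) by move=> x; case: (HF x).
have Fpure : forall x p h, F x (tens1 p h) = iota h (lP x p).
  by move=> x; case: (HF x).
exists (fun t x => F x t).
split; first by move=> t u x; rewrite Fadd.
split; first by move=> p h x; rewrite Fpure ilin.
have HOMiota : forall h p, HOM mulA DA lK DK (fun y => iota h (lP y p)).
  move=> h p; have [s [Hs Ef]] := Hiota_in h.
  apply: (HOM_sum (s := s) (F := fun i y => i.2 (lP y (rP p i.1)))); last first.
    by move=> y; rewrite Ef; apply: eq_bigr => i _; rewrite lrP.
  move=> i Hi.
  apply: (HOM_psi (DX := DP) (psi := fun q y => lP y q) _ _ _ _ _ lKD (Hs i Hi) (rP p i.1)).
  - exact: HPg.2.1.
  - by move=> x1 x2 m; rewrite lPD.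
  - by move=> x m1 m2; rewrite lPDl.
  - by move=> x a m; rewrite lPM.
  - by move=> s' t x m Hx Hm; apply: lPdeg.
have SHOMmu : forall g q, HOM mulA DA lK DK g -> SHOM lP rP DP lK DK (fun p => g (mu p q)).
  move=> g q Hg; have [s Eq] := HQul q.
  apply: (SHOM_sum (s := s) (F := fun i p => g (mu (rP p i.1) i.2))); last first.
    move=> p; rewrite Eq (addf_sum (muD2 p)) (addf_sum (additiveD (HOM_additive Hg))).
    by apply: eq_bigr => i _; rewrite mubal.
  move=> i _; apply: (SHOM_single (b := i.1) (g := fun p => g (mu p i.2))) => //.
  apply: (HOM_psi (DX := DQ) (psi := fun q p => mu p q) _ _ _ _ _ lKD Hg i.2).
  - exact: HQg.2.1.
  - by move=> x1 x2 m; rewrite muD2.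
  - by move=> x m1 m2; rewrite muD1.
  - by move=> x a m; rewrite muL.
  - by move=> s' t x m Hx Hm; apply: mudeg.
split.
  move=> t; have [s Es] := tensor_span Ht1 t.
  apply: (SHOM_sum (s := s) (F := fun j x => iota j.2 (lP x j.1))); last first.
    move=> x /=; rewrite Es (addf_sum (additiveD (Fadd x))).
    by apply: eq_bigr => j _; rewrite Fpure.
  move=> j _; have [sp Ep] := HPul j.1.
  apply: (SHOM_sum (s := sp) (F := fun k x => iota j.2 (lP (mulA x k.1) k.2))); last first.
    move=> x; rewrite Ep (addf_sum (lPD x)) (addf_sum (additiveD (iadd j.2))).
    by apply: eq_bigr => k _; rewrite lPM.
  move=> k _; apply: (SHOM_single (b := k.1) (HOMiota j.2 k.2)) => //.
split.
  move=> f [sf [Hsf Ef]].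
  apply: (im_sum Fadd (s := sf) (F := fun j x => j.2 (mulA x j.1))) => // j Hj.
  have Hh := Hsf j Hj.
  have [sa Ea] := Hsa j.1.
  apply: (im_sum Fadd (s := sa) (F := fun k x => j.2 (mulA x (mu k.1 k.2)))); last first.
    move=> x; rewrite Ea (addf_sum (mulADr x)).
    exact: (addf_sum (additiveD (HOM_additive Hh))).
  move=> k _; have [h Eh] := Hiota_onto (SHOMmu _ k.2 Hh).
  by exists (tens1 k.1 h) => x; rewrite Fpure Eh muL.
split.
  move=> a t x.
  apply: (tensor_ext Ht1 (f := fun t => F x (lT1 a t)) (g := F (mulA x a))).
  - exact: (additive_comp (Fadd x) (lT1sub a)).
  - exact: Fadd.
  - by move=> p h; rewrite HlT1 !Fpure lPM.
have Hdec : forall h, exists s : seq (G * H),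
    (forall y, List.In y s -> DH y.1 y.2) /\ h = \sum_(y <- s) y.2.
  move=> h.
  have [l [Hl El]] : exists l : seq (G * H), (forall y, List.In y l -> DH y.1 y.2) /\
      forall p, iota h p = \sum_(y <- l) iota y.2 p.
    have [s [Hs Ef]] := Hiota_in h.
    apply: (dec_sum (s := s) (F := fun i p => i.2 (rP p i.1))) => // i Hi.
    have [sz [Hsz Ez]] := Hs i Hi.
    have [sw [Hsw Ew]] := HBg.2.1 i.1.
    apply: (dec_sum (s := sw) (F := fun w p => i.2 (rP p w.2))); last first.
      move=> p; rewrite Ew (addf_sum (fun x y => rPDr x y p)).
      exact: (addf_sum (additiveD (HOM_additive (Hs i Hi)))).
    move=> w Hw.
    apply: (dec_sum (s := sz) (F := fun z p => z.2 (rP p w.2))); last first.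
      by move=> p; rewrite Ez.
    move=> z Hz; have [zadd [zlin zdeg]] := Hsz z Hz.
    have Sg : SHOM lP rP DP lK DK (fun p => z.2 (rP p w.2)).
      apply: (SHOM_single (b := w.2) (g := z.2)) => //.
      exact: (HOM_graded (Hsz z Hz)).
    have [h' Eh'] := Hiota_onto Sg.
    exists [:: (gmul w.1 z.1, h')]; split; last by move=> p; rewrite big_seq1.
    move=> y [<-|[]] /=; apply/Hiota_deg.
    split; first exact: iadd.
    split; first exact: ilin.
    by move=> tau m Hm; rewrite Eh' gmulA; apply: zdeg; apply: rPdeg => //; apply: Hsw.
  exists l; split => //; apply: Hiota_inj => p.
  by rewrite El (addf_sum (iDh p)).
split.
  move=> sigma t Ht.
  split.
    move=> x y; apply: (tensor_ext Ht1 (f := F (x - y)) (g := fun t => F x t - F y t)).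
    - exact: Fadd.
    - exact: additive_sub.
    - by move=> p h; rewrite !Fpure lPsub iadd.
  split.
    move=> a x; apply: (tensor_ext Ht1 (f := F (mulA a x)) (g := fun t => lK a (F x t))).
    - exact: Fadd.
    - apply: additive_comp => //.
      by have [] := addP_props (lKD a).
    - by move=> p h; rewrite !Fpure lPM ilin.
  move=> tau x Hx.
  have [s [Hs Es]] := tensor_hspan Ht1 (HPg.2.1) Hdec t.
  pose s' := map (fun z : (G * P) * (G * H) => (gmul z.1.1 z.2.1, tens1 z.1.2 z.2.2)) s.
  have Es' : t = \sum_(y <- s') y.2 by rewrite big_map.
  have Hs' : forall y, List.In y s' -> DT1 y.1 y.2.
    move=> y Hy; have [z [Hz ->]] := in_map_seq Hy; rewrite /=.
    by case: (Hs z Hz) => H1 H2; apply: HDT1t.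
  have Et := grading_homog HDT1 Hs' Ht Es'.
  rewrite /s' big_map in Et.
  rewrite Et (addf_sum (additiveD (Fadd x))).
  apply: (grading_sum HKg) => z Hz.
  case: eqGP => [E|_]; last first.
    by have [-> _ _] := addP_props (additiveD (Fadd x)); apply: (grading_0 HKg).
  case: (Hs z Hz) => H1 H2.
  have [_ [_ Hd]] := (Hiota_deg _ _).1 H2.
  by rewrite -E Fpure gmulA; apply: Hd; apply: lPdeg.
move=> t /= H0 a.
have [sa ->] := Hsa a.
have lT1D : forall t a1 a2, lT1 (a1 + a2) t = lT1 a1 t + lT1 a2 t.
  move=> t' a1 a2.
  apply: (tensor_ext Ht1 (f := lT1 (a1 + a2)) (g := fun t => lT1 a1 t + lT1 a2 t)).
  - exact: lT1sub.
  - exact: additive_add.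
  - by move=> p h; rewrite !HlT1 lPDl (tens_addl Ht1).
rewrite (addf_sum (fun a1 a2 => lT1D t a1 a2)).
apply: sum_zero => k _.
have lHaddh : forall b h1 h2, lH b (h1 + h2) = lH b h1 + lH b h2.
  move=> b h1 h2; apply: Hiota_inj => p.
  by rewrite Hiota_lin !iDh !Hiota_lin.
have lHaddb : forall b1 b2 h, lH (b1 + b2) h = lH b1 h + lH b2 h.
  move=> b1 b2 h; apply: Hiota_inj => p.
  by rewrite Hiota_lin iDh !Hiota_lin rPDr (additiveD (iadd h)).
have [chi [chiadd chipure]] : exists chi : T1 -> H, additive_fun chi /\
    forall p h, chi (tens1 p h) = lH (nu k.2 p) h.
  apply: (tensor_univ Ht1).
    by split=> *; rewrite ?nuD2 ?lHaddb ?lHaddh.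
  move=> p b h; apply: Hiota_inj => p'.
  by rewrite !Hiota_lin nuR rPM.
have E1 : forall t, lT1 (mu k.1 k.2) t = tens1 k.1 (chi t).
  apply: (tensor_ext Ht1 (f := lT1 (mu k.1 k.2)) (g := fun t => tens1 k.1 (chi t))).
  - exact: lT1sub.
  - apply: additive_comp => //.
    by have [] := addP_props (tens_addr Ht1 k.1).
  - by move=> p h; rewrite HlT1 chipure -PC (tens_bal Ht1).
have E2 : forall t p', iota (chi t) p' = F (mu p' k.2) t.
  move=> t' p'.
  apply: (tensor_ext Ht1 (f := fun t => iota (chi t) p') (g := F (mu p' k.2))).
  - exact: (additive_comp (iaddh p') chiadd).
  - exact: Fadd.
  - by move=> p h; rewrite chipure Hiota_lin Fpure PC.
have Z : chi t = 0.
  by apply: Hiota_inj => p'; rewrite E2 H0 i0.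
by rewrite E1 Z (tens_0r Ht1).
Qed.


End Part1.

Section Part2.
Variables (G : grp)
  (A : zmodType) (mulA : A -> A -> A) (DA : G -> A -> Prop)
  (B : zmodType) (mulB : B -> B -> B) (DB : G -> B -> Prop)
  (HB : graded_ring mulB DB)
  (P : zmodType) (lP : A -> P -> P) (rP : P -> B -> P) (DP : G -> P -> Prop)
  (Q : zmodType) (lQ : B -> Q -> Q) (rQ : Q -> A -> Q) (DQ : G -> Q -> Prop)
  (HP : graded_bimod mulA DA mulB DB lP rP DP)
  (mu : P -> Q -> A) (nu : Q -> P -> B)
  (Hctx : graded_morita_context mulA DA mulB DB lP rP DP lQ rQ DQ mu nu)
  (Hsurj : surjective_traces mu nu)
  (L : zmodType) (lL : B -> L -> L) (DL : G -> L -> Prop)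
  (HL : graded_lmod mulB DB lL DL)
  (T2 : zmodType) (tens2 : P -> L -> T2) (Ht2 : is_tensor rP lL tens2)
  (lT2 : A -> T2 -> T2) (DT2 : G -> T2 -> Prop)
  (HlT2_add : forall a t u, lT2 a (t + u) = lT2 a t + lT2 a u)
  (HlT2 : forall a p l, lT2 a (tens2 p l) = tens2 (lP a p) l)
  (HDT2 : is_grading DT2)
  (HDT2t : forall s t p l, DP s p -> DL t l -> DT2 (gmul s t) (tens2 p l))
  (T3 : zmodType) (tens3 : B -> L -> T3) (Ht3 : is_tensor mulB lL tens3)
  (lT3 : B -> T3 -> T3) (DT3 : G -> T3 -> Prop)
  (HlT3_add : forall b t u, lT3 b (t + u) = lT3 b t + lT3 b u)
  (HlT3 : forall b b' l, lT3 b (tens3 b' l) = tens3 (mulB b b') l)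
  (HDT3 : is_grading DT3)
  (HDT3t : forall s t b l, DB s b -> DL t l -> DT3 (gmul s t) (tens3 b l)).

Lemma part2 :
  (exists gamma : T3 -> P -> T2,
     (forall t u p, gamma (t - u) p = gamma t p - gamma u p) /\
     (forall b l p, gamma (tens3 b l) p = tens2 (rP p b) l) /\
     (forall t, SHOM lP rP DP lT2 DT2 (gamma t)) /\
     (forall f, SHOM lP rP DP lT2 DT2 f -> exists t, forall p, gamma t p = f p) /\
     (forall b t p, gamma (lT3 b t) p = gamma t (rP p b)) /\
     (forall sigma t, DT3 sigma t -> graded_hom lP DP lT2 DT2 sigma (gamma t)) /\
     (forall t, (forall p, gamma t p = 0) -> forall b, lT3 b t = 0)).
Proof.
case: HB => [HBg [mulBA [mulBDr [mulBDl mulBdeg]]]].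
case: HP => [[HPg [lPD [lPDl [lPM lPdeg]]]] [[_ [rPD [rPDr [rPM rPdeg]]]] [lrP [HPul HPur]]]].
case: Hctx => [[muD1 muD2] [mubal [muL [muR [mudeg [[nuD1 nuD2] [nubal [nuL [nuR [nudeg [PC QC]]]]]]]]]]].
case: Hsurj => [Hsa Hsb].
case: HL => [HLg [lLD [lLDl [lLM lLdeg]]]].
have rPsub : forall b, additive_fun (fun p => rP p b).
  by move=> b; have [] := addP_props (fun x y => rPD b x y).
have rPsubr : forall p, additive_fun (rP p).
  by move=> p; have [] := addP_props (fun x y => rPDr x y p).
have t2subl : forall l, additive_fun (fun p => tens2 p l).
  by move=> l; have [] := addP_props (fun x y => tens_addl Ht2 x y l).
have t2subr : forall p, additive_fun (tens2 p).
  by move=> p; have [] := addP_props (tens_addr Ht2 p).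
have lT3sub : forall b, additive_fun (lT3 b).
  by move=> b; have [] := addP_props (HlT3_add b).
have lT2sub : forall a, additive_fun (lT2 a).
  by move=> a; have [] := addP_props (HlT2_add a).
have Hex : forall p, exists h : T3 -> T2, additive_fun h /\
    forall b l, h (tens3 b l) = tens2 (rP p b) l.
  move=> p; apply: (tensor_univ Ht3).
    split=> *; by rewrite ?rPDr ?(tens_addl Ht2) ?(tens_addr Ht2).
  by move=> b b' l; rewrite rPM (tens_bal Ht2).
have [gam Hgam] := fchoice Hex.
have gadd : forall p, additive_fun (gam p) by move=> p; case: (Hgam p).
have gpure : forall p b l, gam p (tens3 b l) = tens2 (rP p b) l.
  by move=> p; case: (Hgam p).
exists (fun t p => gam p t).
split; first by move=> t u p; rewrite gadd.
split; first by [].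
have HOMt2 : forall l, HOM lP DP lT2 DT2 (fun p => tens2 p l).
  move=> l.
  have Hid : HOM lT2 DT2 lT2 DT2 id.
    apply: (@HOM_graded _ _ _ _ _ _ _ _ (gone G)); split; first by [].
    split; first by [].
    by move=> tau m Hm; rewrite gmul1r.
  apply: (HOM_psi (DX := DL) (psi := fun l p => tens2 p l) _ _ _ _ _ HlT2_add Hid l).
  - exact: HLg.2.1.
  - by move=> x1 x2 m; rewrite (tens_addr Ht2).
  - by move=> x m1 m2; rewrite (tens_addl Ht2).
  - by move=> x a m; rewrite HlT2.
  - by move=> s t x m Hx Hm; apply: HDT2t.
split.
  move=> t; have [s Es] := tensor_span Ht3 t.
  apply: (SHOM_sum (s := s) (F := fun j p => tens2 (rP p j.1) j.2)).
    by move=> j _; apply: (SHOM_single (b := j.1) (HOMt2 j.2)).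
  move=> p /=; rewrite Es (addf_sum (additiveD (gadd p))).
  by apply: eq_bigr => j _; rewrite gpure.
have pre : forall q y, exists t, forall p, gam p t = lT2 (mu p q) y.
  move=> q y; have [s ->] := tensor_span Ht2 y.
  apply: (im_sum gadd (s := s) (F := fun j p => lT2 (mu p q) (tens2 j.1 j.2))).
    by move=> j _; exists (tens3 (nu q j.1) j.2) => p; rewrite gpure PC HlT2.
  by move=> p; rewrite (addf_sum (HlT2_add _)).
split.
  move=> f [sf [Hsf Ef]].
  apply: (im_sum gadd (s := sf) (F := fun j p => j.2 (rP p j.1))) => // j Hj.
  have Hh := Hsf j Hj.
  have [sb Eb] := Hsb j.1.
  apply: (im_sum gadd (s := sb) (F := fun k p => j.2 (rP p (nu k.1 k.2)))); last first.
    move=> p; rewrite Eb (addf_sum (additiveD (rPsubr p))).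
    exact: (addf_sum (additiveD (HOM_additive Hh))).
  move=> k _; have [t Et] := pre k.1 (j.2 k.2).
  by exists t => p; rewrite Et PC (HOM_lin HlT2_add Hh).
split.
  move=> b t p.
  apply: (tensor_ext Ht3 (f := fun t => gam p (lT3 b t)) (g := gam (rP p b))).
  - exact: (additive_comp (gadd p) (lT3sub b)).
  - exact: gadd.
  - by move=> b' l; rewrite HlT3 !gpure rPM.
split.
  move=> sigma t Ht.
  split.
    move=> x y; apply: (tensor_ext Ht3 (f := gam (x - y)) (g := fun t => gam x t - gam y t)).
    - exact: gadd.
    - exact: additive_sub.
    - by move=> b l; rewrite !gpure rPsub t2subl.
  split.
    move=> a p; apply: (tensor_ext Ht3 (f := gam (lP a p)) (g := fun t => lT2 a (gam p t))).
    - exact: gadd.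
    - exact: additive_comp.
    - by move=> b l; rewrite !gpure lrP HlT2.
  move=> tau p Hp.
  have [s [Hs Es]] := tensor_hspan Ht3 (HBg.2.1) (HLg.2.1) t.
  pose s' := map (fun z : (G * B) * (G * L) => (gmul z.1.1 z.2.1, tens3 z.1.2 z.2.2)) s.
  have Es' : t = \sum_(x <- s') x.2 by rewrite big_map.
  have Hs' : forall x, List.In x s' -> DT3 x.1 x.2.
    move=> x Hx; have [z [Hz ->]] := in_map_seq Hx; rewrite /=.
    by case: (Hs z Hz) => H1 H2; apply: HDT3t.
  have Et := grading_homog HDT3 Hs' Ht Es'.
  rewrite /s' big_map in Et.
  rewrite Et (addf_sum (additiveD (gadd p))).
  apply: (grading_sum HDT2) => z Hz.
  case: eqGP => [E|_]; last first.
    by have [-> _ _] := addP_props (additiveD (gadd p)); apply: (grading_0 HDT2).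
  case: (Hs z Hz) => H1 H2.
  by rewrite -E gpure gmulA; apply: HDT2t => //; apply: rPdeg.
move=> t /= H0 b.
have [sb ->] := Hsb b.
have lT3D : forall t b1 b2, lT3 (b1 + b2) t = lT3 b1 t + lT3 b2 t.
  move=> t' b1 b2.
  apply: (tensor_ext Ht3 (f := lT3 (b1 + b2)) (g := fun t => lT3 b1 t + lT3 b2 t)).
  - exact: lT3sub.
  - exact: additive_add.
  - by move=> b' l; rewrite !HlT3 mulBDl (tens_addl Ht3).
rewrite (addf_sum (fun b1 b2 => lT3D t b1 b2)).
apply: sum_zero => k _.
have [th [thadd thpure]] : exists th : T2 -> T3, additive_fun th /\
    forall p l, th (tens2 p l) = tens3 (nu k.1 p) l.
  apply: (tensor_univ Ht2).
    by split=> *; rewrite ?nuD2 ?(tens_addl Ht3) ?(tens_addr Ht3).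
  by move=> p b' l; rewrite nuR (tens_bal Ht3).
have Eth : forall t, th (gam k.2 t) = lT3 (nu k.1 k.2) t.
  apply: (tensor_ext Ht3 (f := fun t => th (gam k.2 t)) (g := lT3 (nu k.1 k.2))).
  - exact: additive_comp.
  - exact: lT3sub.
  - by move=> b' l; rewrite gpure thpure nuR HlT3.
by rewrite -Eth H0; have [] := addP_props (additiveD thadd).
Qed.

End Part2.
Theorem proposition5p3
  (G : grp)
  (* idempotent graded rings A, B *)
  (A : zmodType) (mulA : A -> A -> A) (DA : G -> A -> Prop)
  (B : zmodType) (mulB : B -> B -> B) (DB : G -> B -> Prop)
  (HA : graded_ring mulA DA) (HAi : idempotent_ring mulA)
  (HB : graded_ring mulB DB) (HBi : idempotent_ring mulB)
  (* graded bimodules _A P _B and _B Q _A, unital on both sides *)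
  (P : zmodType) (lP : A -> P -> P) (rP : P -> B -> P) (DP : G -> P -> Prop)
  (Q : zmodType) (lQ : B -> Q -> Q) (rQ : Q -> A -> Q) (DQ : G -> Q -> Prop)
  (HP : graded_bimod mulA DA mulB DB lP rP DP)
  (HQ : graded_bimod mulB DB mulA DA lQ rQ DQ)
  (* graded Morita context with surjective trace maps *)
  (mu : P -> Q -> A) (nu : Q -> P -> B)
  (Hctx : graded_morita_context mulA DA mulB DB lP rP DP lQ rQ DQ mu nu)
  (Hsurj : surjective_traces mu nu)
  (* unital torsion-free graded modules _A K and _B L *)
  (K : zmodType) (lK : A -> K -> K) (DK : G -> K -> Prop)
  (HK : graded_lmod mulA DA lK DK) (HKu : unital_lmod lK) (HKt : torsion_free lK)
  (L : zmodType) (lL : B -> L -> L) (DL : G -> L -> Prop)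
  (HL : graded_lmod mulB DB lL DL) (HLu : unital_lmod lL) (HLt : torsion_free lL)
  (* H : a copy of the graded left B-module B.HOM_A(P,K), embedded by iota *)
  (H : zmodType) (lH : B -> H -> H) (DH : G -> H -> Prop) (iota : H -> P -> K)
  (Hiota_add : forall h1 h2 p, iota (h1 - h2) p = iota h1 p - iota h2 p)
  (Hiota_inj : forall h1 h2, (forall p, iota h1 p = iota h2 p) -> h1 = h2)
  (Hiota_in : forall h, SHOM lP rP DP lK DK (iota h))
  (Hiota_onto : forall f, SHOM lP rP DP lK DK f -> exists h, forall p, iota h p = f p)
  (Hiota_lin : forall b h p, iota (lH b h) p = iota h (rP p b))
  (Hiota_deg : forall sigma h, DH sigma h <-> graded_hom lP DP lK DK sigma (iota h))
  (* T1 = P (x)_B H, with its graded left A-module structure *)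
  (T1 : zmodType) (tens1 : P -> H -> T1) (Ht1 : is_tensor rP lH tens1)
  (lT1 : A -> T1 -> T1) (DT1 : G -> T1 -> Prop)
  (HlT1_add : forall a t u, lT1 a (t + u) = lT1 a t + lT1 a u)
  (HlT1 : forall a p h, lT1 a (tens1 p h) = tens1 (lP a p) h)
  (HDT1 : is_grading DT1)
  (HDT1t : forall s t p h, DP s p -> DH t h -> DT1 (gmul s t) (tens1 p h))
  (* T2 = P (x)_B L, with its graded left A-module structure *)
  (T2 : zmodType) (tens2 : P -> L -> T2) (Ht2 : is_tensor rP lL tens2)
  (lT2 : A -> T2 -> T2) (DT2 : G -> T2 -> Prop)
  (HlT2_add : forall a t u, lT2 a (t + u) = lT2 a t + lT2 a u)
  (HlT2 : forall a p l, lT2 a (tens2 p l) = tens2 (lP a p) l)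
  (HDT2 : is_grading DT2)
  (HDT2t : forall s t p l, DP s p -> DL t l -> DT2 (gmul s t) (tens2 p l))
  (* T3 = B (x)_B L, with its graded left B-module structure *)
  (T3 : zmodType) (tens3 : B -> L -> T3) (Ht3 : is_tensor mulB lL tens3)
  (lT3 : B -> T3 -> T3) (DT3 : G -> T3 -> Prop)
  (HlT3_add : forall b t u, lT3 b (t + u) = lT3 b t + lT3 b u)
  (HlT3 : forall b b' l, lT3 b (tens3 b' l) = tens3 (mulB b b') l)
  (HDT3 : is_grading DT3)
  (HDT3t : forall s t b l, DB s b -> DL t l -> DT3 (gmul s t) (tens3 b l)) :
  (* (1) phi : P (x)_B B.HOM_A(P,K) -> A.HOM_A(A,K) *)
  (exists phi : T1 -> A -> K,
     (forall t u x, phi (t - u) x = phi t x - phi u x) /\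
     (forall p h x, phi (tens1 p h) x = iota h (lP x p) /\
                    phi (tens1 p h) x = lK x (iota h p)) /\
     (forall t, SHOM mulA mulA DA lK DK (phi t)) /\
     (forall f, SHOM mulA mulA DA lK DK f -> exists t, forall x, phi t x = f x) /\
     (forall a t x, phi (lT1 a t) x = phi t (mulA x a)) /\
     (forall sigma t, DT1 sigma t -> graded_hom mulA DA lK DK sigma (phi t)) /\
     (forall t, (forall x, phi t x = 0) -> forall a, lT1 a t = 0)) /\
  (* (2) gamma : B (x)_B L -> B.HOM_A(P, P (x)_B L) *)
  (exists gamma : T3 -> P -> T2,
     (forall t u p, gamma (t - u) p = gamma t p - gamma u p) /\
     (forall b l p, gamma (tens3 b l) p = tens2 (rP p b) l) /\
     (forall t, SHOM lP rP DP lT2 DT2 (gamma t)) /\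
     (forall f, SHOM lP rP DP lT2 DT2 f -> exists t, forall p, gamma t p = f p) /\
     (forall b t p, gamma (lT3 b t) p = gamma t (rP p b)) /\
     (forall sigma t, DT3 sigma t -> graded_hom lP DP lT2 DT2 sigma (gamma t)) /\
     (forall t, (forall p, gamma t p = 0) -> forall b, lT3 b t = 0)).
Proof.
split; [apply: part1|apply: part2]; eassumption.
Qed.
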